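(* For every real $\alpha$ with $0<\alpha<1/2$ there exists a positive constant $c_\alpha$ such that for every real $M\ge 2$, \[ \prod_{p\le M}\Bigl(p^{2\alpha-2}\Bigl(1-\frac1p\Bigr)^{2\alpha}+\frac2p\Bigl(1-\frac1p\Bigr)+\Bigl(1-\frac1p\Bigr)^{2-2\alpha}\Bigr)\ge c_\alpha(\log M)^{2\alpha}, \] where the product runs over primes $p\le M$. *)

(* Defs.v *)
From Stdlib Require Import Reals ZArith Znumtheory List Lra.
Open Scope R_scope.

Definition is_prime_nat (p : nat) : bool :=
  if prime_dec (Z.of_nat p) then true else false.

Definition lemma7_factor (alpha : R) (p : nat) : R :=
  let q := INR p in
  Rpower q (2*alpha - 2) * Rpower (1 - 1/q) (2*alpha)
  + 2 / q * (1 - 1/q)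
  + Rpower (1 - 1/q) (2 - 2*alpha).

Fixpoint prod_primes_upto (f : nat -> R) (N : nat) : R :=
  match N with
  | O => 1
  | S n => (if is_prime_nat (S n) then f (S n) else 1) * prod_primes_upto f n
  end.

(* primes p <= M for real M >= 0 are exactly primes p <= floor M *)
Definition prod_primes_le (f : nat -> R) (M : R) : R :=
  prod_primes_upto f (Z.to_nat (Int_part M)).

(* Main.v *)
Require Import Defs.
From Stdlib Require Import Reals.
From Stdlib Require Import Reals ZArith Znumtheory Lia Lra Psatz.
Open Scope R_scope.

Fixpoint sumH (N : nat) : R :=
  match N with O => 0%R | S n => (sumH n + / INR (S n))%R end.
Definition Gf (p : nat) : R := INR p / (INR p - 1).

Lemma exp_le_mono x y : x <= y -> exp x <= exp y.
Proof.
intros H; destruct (Rle_lt_or_eq_dec _ _ H) as [H1|H1].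
- left; apply exp_increasing; exact H1.
- subst; lra.
Qed.

Lemma ln_1px x : 0 < x -> ln (1 + x) <= x.
Proof.
intros Hx; destruct (Rle_or_lt (ln (1 + x)) x) as [H|H]; auto.
apply exp_increasing in H; rewrite exp_ln in H by lra.
pose proof (exp_ineq1_le x); lra.
Qed.

Lemma harm_ln N : ln (INR N + 1) <= sumH N.
Proof.
induction N as [|N IH].
- simpl; rewrite Rplus_0_l, ln_1; lra.
- change (sumH (S N)) with (sumH N + / INR (S N)).
  rewrite S_INR.
  pose proof (pos_INR N) as HN.
  assert (E : INR N + 1 + 1 = (INR N + 1) * (1 + / (INR N + 1))) by (field; lra).
  assert (Hi : 0 < / (INR N + 1)) by (apply Rinv_0_lt_compat; lra).
  rewrite E, ln_mult by lra.
  pose proof (ln_1px (/ (INR N + 1)) Hi).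
  lra.
Qed.

Lemma prime_ge2 p : is_prime_nat p = true -> (2 <= p)%nat.
Proof.
unfold is_prime_nat; destruct (prime_dec (Z.of_nat p)) as [H|H]; [|discriminate].
intros _; pose proof (prime_ge_2 _ H); lia.
Qed.

Section Prod.
Variable f g h : nat -> R.

Lemma prod_pos N : (forall p, is_prime_nat p = true -> 0 < f p) ->
  0 < prod_primes_upto f N.
Proof.
intros Hf; induction N as [|N IH]; simpl; [lra|].
destruct (is_prime_nat (S N)) eqn:E.
- apply Rmult_lt_0_compat; auto.
- lra.
Qed.

Lemma prod_mul N : (forall p, is_prime_nat p = true -> f p = g p * h p) ->
  prod_primes_upto f N = prod_primes_upto g N * prod_primes_upto h N.
Proof.
intros Hf; induction N as [|N IH]; simpl; [lra|].
destruct (is_prime_nat (S N)) eqn:E.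
- rewrite IH, Hf by auto; ring.
- rewrite IH; ring.
Qed.

Lemma prod_le N : (forall p, is_prime_nat p = true -> 0 <= f p <= g p) ->
  0 <= prod_primes_upto f N <= prod_primes_upto g N.
Proof.
intros Hf; induction N as [|N IH]; simpl; [lra|].
destruct (is_prime_nat (S N)) eqn:E.
- destruct (Hf _ E); split; [apply Rmult_le_pos; lra|].
  apply Rmult_le_compat; lra.
- lra.
Qed.

Lemma prod_rpow N e : (forall p, is_prime_nat p = true -> 0 < f p) ->
  prod_primes_upto (fun p => Rpower (f p) e) N = Rpower (prod_primes_upto f N) e.
Proof.
intros Hf; induction N as [|N IH]; simpl.
- unfold Rpower; rewrite ln_1, Rmult_0_r, exp_0; reflexivity.
- destruct (is_prime_nat (S N)) eqn:E.
  + rewrite IH, Rpower_mult_distr; auto. apply prod_pos; auto.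
  + rewrite !Rmult_1_l, IH; reflexivity.
Qed.
End Prod.

Lemma rpow_pos x e : 0 < Rpower x e.
Proof. unfold Rpower; apply exp_pos. Qed.

Lemma rpow_dec y e1 e2 : 0 < y <= 1 -> e1 <= e2 -> Rpower y e2 <= Rpower y e1.
Proof.
intros Hy He; unfold Rpower; apply exp_le_mono.
assert (ln y <= 0).
{ destruct (Rle_lt_or_eq_dec _ _ (proj2 Hy)) as [H|H].
  - rewrite <- ln_1; left; apply ln_increasing; lra.
  - subst; rewrite ln_1; lra. }
nra.
Qed.

Lemma rpow2 y : 0 < y -> Rpower y 2 = y * y.
Proof.
intros Hy; replace 2 with (INR 2) by (simpl; lra).
rewrite Rpower_pow by lra; simpl; ring.
Qed.

Definition hf (a : R) (p : nat) : R :=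
  lemma7_factor a p * Rpower (1 - 1 / INR p) (2 * a).

Section Point.
Variable a : R.
Hypothesis Ha : 0 < a < 1/2.
Variable p : nat.
Hypothesis Hp : (2 <= p)%nat.

Let q := INR p.
Lemma q2 : 2 <= q.
Proof. unfold q; replace 2 with (INR 2) by (simpl; lra); apply le_INR; exact Hp. Qed.

Lemma Gf_pos : 0 < Gf p.
Proof. pose proof q2; unfold Gf; fold q; apply Rdiv_lt_0_compat; lra. Qed.

Lemma y_bounds : 1/2 <= 1 - 1 / q < 1.
Proof.
pose proof q2.
assert (0 < 1/q <= 1/2).
{ split; [apply Rdiv_lt_0_compat; lra|].
  apply Rmult_le_reg_r with q; [lra|]. field_simplify; lra. }
lra.
Qed.

Lemma factor_split : lemma7_factor a p = hf a p * Rpower (Gf p) (2 * a).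
Proof.
unfold hf; rewrite Rmult_assoc, Rpower_mult_distr.
2: pose proof y_bounds; fold q; lra.
2: exact Gf_pos.
replace ((1 - 1 / INR p) * Gf p) with 1.
- unfold Rpower; rewrite ln_1, Rmult_0_r, exp_0; ring.
- unfold Gf; fold q; pose proof q2; field; lra.
Qed.

Lemma factor_pos : 0 < lemma7_factor a p.
Proof.
unfold lemma7_factor; fold q.
pose proof y_bounds; pose proof q2.
pose proof (rpow_pos q (2*a-2)); pose proof (rpow_pos (1 - 1/q) (2*a));
pose proof (rpow_pos (1 - 1/q) (2 - 2*a)).
assert (0 < 2 / q) by (apply Rdiv_lt_0_compat; lra).
assert (0 < Rpower q (2*a-2) * Rpower (1 - 1/q) (2*a)) by (apply Rmult_lt_0_compat; lra).
assert (0 < 2/q * (1 - 1/q)) by (apply Rmult_lt_0_compat; lra).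
lra.
Qed.

Lemma hf_pos : 0 < hf a p.
Proof. unfold hf; apply Rmult_lt_0_compat; [apply factor_pos|apply rpow_pos]. Qed.

Lemma hf_ge1 : 12 <= Rpower q (2 * a) -> 1 <= hf a p.
Proof.
intros H12.
pose proof y_bounds as Hy; pose proof q2 as Hq.
unfold hf, lemma7_factor; fold q.
set (y := 1 - 1/q) in *.
set (B := Rpower y (2*a)).
assert (HB : y <= B).
{ unfold B; rewrite <- (Rpower_1 y) at 1 by lra. apply rpow_dec; lra. }
assert (HBB : y * y <= B * B).
{ unfold B; rewrite <- Rpower_plus, <- rpow2 by lra. apply rpow_dec; lra. }
assert (HD : Rpower y (2 - 2*a) * B = y * y).
{ unfold B; rewrite <- Rpower_plus, <- rpow2 by lra. f_equal; ring. }
assert (HA : Rpower q (2*a-2) = Rpower q (2*a) * / (q*q)).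
{ unfold Rminus; rewrite Rpower_plus, Rpower_Ropp, rpow2 by lra. reflexivity. }
rewrite HA.
set (x := / q).
assert (Hyx : y = 1 - x) by (unfold y, x; field; lra).
assert (Hx : 0 < x <= /2).
{ unfold x; split; [apply Rinv_0_lt_compat; lra|]. apply Rinv_le_contravar; lra. }
assert (E1 : / (q*q) = x * x) by (unfold x; field; lra).
assert (E2 : 2 / q = 2 * x) by (unfold x; field; lra).
rewrite E1, E2.
replace ((Rpower q (2 * a) * (x * x) * B + 2 * x * y + Rpower y (2 - 2 * a)) * B)
  with (Rpower q (2 * a) * (x * x) * (B * B) + 2 * x * y * B + Rpower y (2 - 2 * a) * B) by ring.
rewrite HD.
assert (12 * (x*x) * (y*y) <= Rpower q (2 * a) * (x * x) * (B * B)).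
{ apply Rmult_le_compat; try nra. }
assert (2 * x * y * y <= 2 * x * y * B) by (apply Rmult_le_compat_l; nra).
assert (12*x*x*(1-x)*(1-x) + 2*x*(1-x)*(1-x) + (1-x)*(1-x) >= 1) by nra.
rewrite Hyx in *; nra.
Qed.
End Point.

Definition mf (a : R) (p : nat) : R := Rmin (hf a p) 1.

Section Final.
Variable a : R.
Hypothesis Ha : 0 < a < 1/2.

Definition Bnd : R := Rpower 12 (/ (2 * a)).
Definition P0 : nat := Z.to_nat (up Bnd).

Lemma big_p p : (P0 < p)%nat -> 12 <= Rpower (INR p) (2 * a).
Proof.
intros Hp.
assert (HB : 0 < Bnd) by apply rpow_pos.
destruct (archimed Bnd) as [Hu _].
assert (Hu0 : (0 <= up Bnd)%Z) by (apply le_IZR; lra).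
assert (HP : INR P0 = IZR (up Bnd)) by (unfold P0; rewrite INR_IZR_INZ, Z2Nat.id; auto).
assert (INR P0 < INR p) by (apply lt_INR; exact Hp).
replace 12 with (Rpower Bnd (2 * a)).
- apply Rle_Rpower_l; lra.
- unfold Bnd; rewrite Rpower_mult, Rinv_l, Rpower_1; lra.
Qed.

Lemma mf_bounds p : is_prime_nat p = true -> 0 < mf a p <= 1.
Proof.
intros Hp; unfold mf; split.
- apply Rmin_pos; [apply hf_pos; auto; apply prime_ge2; auto|lra].
- apply Rmin_r.
Qed.

Lemma mf_step n : prod_primes_upto (mf a) (S n) <= prod_primes_upto (mf a) n.
Proof.
simpl. destruct (is_prime_nat (S n)) eqn:E.
- pose proof (mf_bounds _ E). pose proof (prod_pos (mf a) n (fun p Hp => proj1 (mf_bounds p Hp))). nra.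
- lra.
Qed.

Lemma mf_const k : prod_primes_upto (mf a) (P0 + k) = prod_primes_upto (mf a) P0.
Proof.
induction k as [|k IH].
- rewrite Nat.add_0_r; reflexivity.
- rewrite Nat.add_succ_r; simpl. rewrite IH.
  destruct (is_prime_nat (S (P0 + k))) eqn:E; [|ring].
  unfold mf; rewrite Rmin_right; [ring|].
  apply hf_ge1; auto; [apply prime_ge2; auto|]. apply big_p; lia.
Qed.

Lemma mf_lower N : prod_primes_upto (mf a) P0 <= prod_primes_upto (mf a) N.
Proof.
destruct (Nat.le_gt_cases P0 N) as [H|H].
- replace N with (P0 + (N - P0))%nat by lia; rewrite mf_const; lra.
- assert (forall k, prod_primes_upto (mf a) (N + k) <= prod_primes_upto (mf a) N).
  { induction k as [|k IH]; [rewrite Nat.add_0_r; lra|].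
    rewrite Nat.add_succ_r. pose proof (mf_step (N + k)); lra. }
  replace P0 with (N + (P0 - N))%nat by lia; auto.
Qed.
End Final.

Theorem lemma7_core (Heuler : forall N, sumH N <= prod_primes_upto Gf N) :
  forall alpha : R, 0 < alpha < 1/2 ->
  exists c : R, 0 < c /\
    forall M : R, 2 <= M ->
      prod_primes_le (lemma7_factor alpha) M >= c * Rpower (ln M) (2*alpha).
Proof.
intros a Ha.
exists (prod_primes_upto (mf a) (P0 a)); split.
{ apply prod_pos; intros p Hp; apply mf_bounds; auto. }
intros M HM.
unfold prod_primes_le.
set (N := Z.to_nat (Int_part M)).
assert (HN : M < INR N + 1).
{ destruct (base_Int_part M) as [H1 H2].
  assert (0 <= Int_part M)%Z by (apply le_IZR; lra).
  unfold N; rewrite INR_IZR_INZ, Z2Nat.id by auto; lra. }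
rewrite (prod_mul _ (hf a) (fun p => Rpower (Gf p) (2 * a))).
2: { intros p Hp; apply factor_split; auto; apply prime_ge2; auto. }
rewrite prod_rpow by (intros p Hp; apply Gf_pos; apply prime_ge2; auto).
assert (Hln : 0 < ln M) by (rewrite <- ln_1; apply ln_increasing; lra).
assert (Hl2 : ln M <= prod_primes_upto Gf N).
{ pose proof (harm_ln N); pose proof (Heuler N).
  assert (ln M <= ln (INR N + 1)) by (left; apply ln_increasing; lra). lra. }
assert (Hr : Rpower (ln M) (2 * a) <= Rpower (prod_primes_upto Gf N) (2 * a))
  by (apply Rle_Rpower_l; lra).
assert (Hm : prod_primes_upto (mf a) (P0 a) <= prod_primes_upto (hf a) N).
{ eapply Rle_trans; [apply mf_lower; auto|].
  apply prod_le. intros p Hp; pose proof (mf_bounds a Ha p Hp); split; [lra|apply Rmin_l]. }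
pose proof (prod_pos (mf a) (P0 a) (fun p Hp => proj1 (mf_bounds a Ha p Hp))).
pose proof (rpow_pos (ln M) (2 * a)).
apply Rle_ge; apply Rmult_le_compat; lra.
Qed.

Close Scope R_scope.
From mathcomp Require Import all_boot all_order all_algebra.
From mathcomp Require Import ring zify.
From mathcomp Require Import Rstruct.
Import Order.TTheory GRing.Theory Num.Theory.
From mathcomp Require Import ssrnum.
Section Euler.
Variable R : realFieldType.
Local Open Scope ring_scope.

Lemma geom_id (x : R) n : (1 - x) * \sum_(k < n) x ^+ k = 1 - x ^+ n.
Proof.
elim: n => [|n IH]; first by rewrite big_ord0 mulr0 expr0 subrr.
by rewrite big_ord_recr /= mulrDr IH exprS; ring.
Qed.

Lemma prod_logn (N m : nat) : (0 < m)%N -> (m <= N)%N ->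
  (\prod_(i < N.+1) i ^ logn i m)%N = m.
Proof.
move=> m0 mN.
rewrite -(big_mkord xpredT (fun i => i ^ logn i m)%N).
rewrite (big_cat_nat _ (n:=m.+1)) //=.
rewrite [X in (_ * X)%N]big1_seq ?muln1; last first.
  move=> i /andP[_]; rewrite mem_index_iota => /andP[hi _].
  by rewrite ltn_log0.
by rewrite -[RHS](partnT m0) /partn.
Qed.

Lemma harm_le_euler (N : nat) :
  \sum_(n < N) ((n.+1)%:R : R)^-1 <=
  \prod_(i < N.+1 | prime i) ((i%:R : R) / (i%:R - 1)).
Proof.
pose F := fun (i : 'I_N.+1) (k : 'I_N.+1) =>
  if prime i then ((i%:R : R)^-1) ^+ k else ((k == 0 :> nat)%:R : R).
have F0 : forall i k, 0 <= F i k.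
  move=> i k; rewrite /F; case: ifP => _; last exact: ler0n.
  by rewrite exprn_ge0 // invr_ge0 ler0n.
have stepA : \prod_(i < N.+1) \sum_(k < N.+1) F i k <=
  \prod_(i < N.+1 | prime i) ((i%:R : R) / (i%:R - 1)).
  rewrite [X in _ <= X]big_mkcond /=; apply: ler_prod => i _.
  rewrite sumr_ge0 //=; rewrite /F; case: ifP => pi.
    have i1 : (1 < i)%N by apply: prime_gt1.
    have i1R : (1 : R) < i%:R by rewrite ltr1n.
    have x1 : 0 < 1 - (i%:R : R)^-1.
      by rewrite subr_gt0 invf_lt1 // (lt_trans ltr01).
    have -> : (i%:R : R) / (i%:R - 1) = (1 - (i%:R : R)^-1)^-1.
      have i0 : (i%:R : R) != 0 by rewrite gt_eqF // (lt_trans ltr01).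
      have i10 : (i%:R : R) - 1 != 0 by rewrite subr_eq0 gt_eqF.
      by field; rewrite i10 i0.
    rewrite -(ler_pM2l x1) geom_id mulfV ?gt_eqF //.
    by rewrite gerBl exprn_ge0 // invr_ge0 ler0n.
  rewrite big_ord_recl /= big1 ?addr0 //.
rewrite bigA_distr_bigA /= in stepA.
apply: le_trans stepA.
pose W := fun f : {ffun 'I_N.+1 -> 'I_N.+1} => \prod_(i < N.+1) F i (f i).
pose phi := fun n : 'I_N => [ffun i : 'I_N.+1 => (inord (logn i n.+1) : 'I_N.+1)].
have Wphi : forall n : 'I_N, W (phi n) = ((n.+1)%:R : R)^-1.
  move=> n; rewrite /W.
  have nN : (n.+1 <= N)%N := ltn_ord n.
  rewrite (eq_bigr (fun i : 'I_N.+1 => (((i ^ logn i n.+1)%N)%:R : R)^-1)).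
    by rewrite prodfV -natr_prod prod_logn.
  move=> i _; rewrite /phi ffunE /F inordK; last first.
    have h := ltn_logl i (ltn0Sn n); apply: leq_trans h _; exact: leqW.
  case: ifP => pi; first by rewrite natrX exprVn.
  by rewrite lognE pi /= expn0 invr1.
have phi_inj : injective phi.
  move=> n1 n2 /ffunP E; apply: val_inj; apply: succn_inj.
  apply: eqn_from_log => // p.
  have [pN|pN] := ltnP p N.+1.
    have := E (Ordinal pN); rewrite !ffunE => /(congr1 val) /=.
    rewrite !inordK //.
      have := ltn_logl p (ltn0Sn n2); have := ltn_ord n2; lia.
    have := ltn_logl p (ltn0Sn n1); have := ltn_ord n1; lia.
  rewrite !ltn_log0 //.
    by apply: leq_ltn_trans pN; apply: ltn_ord.
  by apply: leq_ltn_trans pN; apply: ltn_ord.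
have -> : \sum_(n < N) ((n.+1)%:R : R)^-1 = \sum_(f in phi @: [set: 'I_N]) W f.
  rewrite big_imset /=; last by move=> x y _ _; apply: phi_inj.
  by apply: eq_big => [n|n _]; rewrite ?inE ?Wphi.
rewrite [X in _ <= X](bigID (mem (phi @: [set: 'I_N]))) /=.
rewrite lerDl sumr_ge0 // => f _.
by rewrite /W prodr_ge0.
Qed.
End Euler.

Lemma is_prime_natE n : is_prime_nat n = prime n.
Proof.
rewrite /is_prime_nat; case: prime_dec => [Hp|Hp].
- symmetry; apply/primeP; split.
    have := prime_ge_2 _ Hp; lia.
  move=> d /dvdnP [q Hq]; subst n.
  have Hd : (Z.of_nat d | Z.of_nat (q * d)).
    by exists (Z.of_nat q); lia.
  have := prime_divisors _ Hp _ Hd.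
  have := prime_ge_2 _ Hp.
  move=> H2 H; apply/orP.
  case: H => [H|[H|[H|H]]]; [lia | left; apply/eqP; lia | right; apply/eqP; lia | lia].
- symmetry; apply/negbTE/negP => /primeP [H1 H2]; apply: Hp.
  apply/prime_alt; split; first lia.
  move=> k Hk [q Hq].
  have q0 : (0 <= q)%Z by nia.
  have Hn : n = (Z.to_nat q * Z.to_nat k)%N.
    apply: Nat2Z.inj; rewrite Nat2Z.inj_mul !Z2Nat.id; lia.
  have : Z.to_nat k %| n by rewrite Hn dvdn_mull.
  move/H2 => /orP [/eqP E|/eqP E]; lia.
Qed.

Lemma prod_bridge (f : nat -> R) N :
  prod_primes_upto f N = (\prod_(i < N.+1 | prime i) f i)%R.
Proof.
elim: N => [|N IH].
  by rewrite big_mkcond big_ord_recr big_ord0 /=; rewrite GRing.mul1r.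
rewrite /= IH [in RHS]big_mkcond big_ord_recr /= -big_mkcond /= is_prime_natE.
by rewrite RmultE GRing.mulrC.
Qed.


Lemma sumH_bridge N : sumH N = (\sum_(n < N) ((n.+1)%:R : R)^-1)%R.
Proof.
elim: N => [|N IH]; first by rewrite big_ord0.
change (Rplus (sumH N) (Rinv (INR N.+1)) = (\sum_(n < N.+1) ((n.+1)%:R : R)^-1))%R; by rewrite IH big_ord_recr RinvE INRE.
Qed.

Open Scope R_scope.


Lemma euler_R N : sumH N <= prod_primes_upto Gf N.
Proof.
rewrite sumH_bridge prod_bridge; apply/RleP.
rewrite /Gf (eq_bigr (fun i : 'I_N.+1 => (i%:R / (i%:R - 1))%R)).
  exact: harm_le_euler.
by move=> i _; rewrite INRE; reflexivity.
Qed.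

Theorem lemma7 : forall alpha : R, 0 < alpha < 1/2 ->
  exists c : R, 0 < c /\
    forall M : R, 2 <= M ->
      prod_primes_le (lemma7_factor alpha) M >= c * Rpower (ln M) (2*alpha).
Proof.
exact (lemma7_core euler_R).
Qed.
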